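(* Let $C\in\mathcal{C}_n$ be an $n$-qubit Clifford unitary with $$C Z_i C^\dagger = (-1)^{f_i} P^{\vec a_i,\vec b_i},\qquad C X_i C^\dagger = (-1)^{h_i} P^{\vec c_i,\vec d_i}\qquad(i=1,\dots,n),$$ where $\vec a_i,\vec b_i,\vec c_i,\vec d_i\in\{0,1\}^n$ and $f_i,h_i\in\{0,1\}$. Define $\vec\alpha,\vec\beta\in\{0,1\}^n$ by $\alpha_i=\vec c_i\cdot\vec d_i \bmod 2$ and $\beta_i=\vec a_i\cdot\vec b_i \bmod 2$. Then $$C^* = e^{i\theta}\, C\, P^{\vec\alpha,\vec\beta}$$ for some phase $\theta\in\mathbb{R}$, where $C^*$ denotes entrywise complex conjugation in the computational basis.
   Context: Single-qubit Paulis: $X=\begin{pmatrix}0&1\\1&0\end{pmatrix}$, $Y=\begin{pmatrix}0&-i\\i&0\end{pmatrix}$, $Z=\begin{pmatrix}1&0\\0&-1\end{pmatrix}$; $X_j,Z_j$ act on qubit $j$. Labeling: $P^{00}=I$, $P^{01}=X$, $P^{10}=Z$, $P^{11}=Y$, and $P^{\vec a,\vec b}=P^{a_1b_1}\otimes\cdots\otimes P^{a_nb_n}$ for $\vec a,\vec b\in\{0,1\}^n$. The Pauli group $\mathcal{P}_n$ consists of the $i^kP^{\vec a,\vec b}$, and $\mathcal{C}_n=\{U\in U(2^n): U\mathcal{P}_nU^\dagger\subseteq\mathcal{P}_n\}$. *)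

(* Defs.v *)
From HB Require Import structures.
From mathcomp Require Import all_boot all_order all_algebra.
Set Implicit Arguments. Unset Strict Implicit. Unset Printing Implicit Defensive.
Import Order.TTheory GRing.Theory Num.Theory.
Local Open Scope ring_scope.

Section Pauli.
Variable C : numClosedFieldType.

Definition pauliX : 'M[C]_2 := \matrix_(x < 2, y < 2) (if x != y then 1 else 0).
Definition pauliZ : 'M[C]_2 := \matrix_(x < 2, y < 2)
  (if x == y then (if val x == 0%N then 1 else -1) else 0).
Definition pauliY : 'M[C]_2 := \matrix_(x < 2, y < 2)
  (if x != y then (if val x == 0%N then - 'i else 'i) else 0).

Definition pauli1 (a b : bool) : 'M[C]_2 :=
  match a, b with
  | false, false => 1%:M
  | false, true => pauliX
  | true, false => pauliZ
  | true, true => pauliY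
  end.

Variable n : nat.

(* bit of basis index x belonging to qubit j (qubit 0 = leftmost tensor
   factor = most significant bit) *)
Definition qbit (x : 'I_(2 ^ n)) (j : 'I_n) : 'I_2 :=
  inord (odd (x %/ 2 ^ (n.-1 - j))).

(* P^{a,b} = P^{a_1 b_1} (x) ... (x) P^{a_n b_n}, entrywise *)
Definition pauli (a b : 'I_n -> bool) : 'M[C]_(2 ^ n) :=
  \matrix_(x, y) \prod_(j < n) pauli1 (a j) (b j) (qbit x j) (qbit y j).

Definition unit_vec (i : 'I_n) : 'I_n -> bool := fun j => j == i.
Definition zero_vec : 'I_n -> bool := fun _ => false.

Definition Xop (i : 'I_n) := pauli zero_vec (unit_vec i).
Definition Zop (i : 'I_n) := pauli (unit_vec i) zero_vec.

Definition conjm (M : 'M[C]_(2 ^ n)) : 'M[C]_(2 ^ n) := map_mx Num.conj M.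
Definition adjm (M : 'M[C]_(2 ^ n)) : 'M[C]_(2 ^ n) := (conjm M)^T.

Definition in_pauli_group (M : 'M[C]_(2 ^ n)) : Prop :=
  exists (k : nat) (a b : 'I_n -> bool), M = 'i ^+ k *: pauli a b.

Definition unitary (U : 'M[C]_(2 ^ n)) : Prop := U *m adjm U = 1%:M.

Definition clifford (U : 'M[C]_(2 ^ n)) : Prop :=
  unitary U /\
  forall Q, in_pauli_group Q -> in_pauli_group (U *m Q *m adjm U).

Definition dot2 (u v : 'I_n -> bool) : bool := odd (\sum_(j < n) (u j && v j)).

End Pauli.

(* Main.v *)
Require Import Defs.
From mathcomp Require Import all_boot all_order all_algebra.
From mathcomp Require Import zify ring lra.
Set Implicit Arguments. Unset Strict Implicit. Unset Printing Implicit Defensive.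
Import Order.TTheory GRing.Theory Num.Theory.
Local Open Scope ring_scope.

Lemma nat_bits_inj m x y : (x < 2 ^ m)%N -> (y < 2 ^ m)%N ->
  (forall k, (k < m)%N -> odd (x %/ 2 ^ k) = odd (y %/ 2 ^ k)) -> x = y.
Proof.
elim: m x y => [|m IH] x y.
  by rewrite expn0 !ltnS !leqn0 => /eqP -> /eqP ->.
move=> hx hy H.
rewrite (divn_eq x 2) (divn_eq y 2) !modn2.
have := H 0%N isT; rewrite expn0 !divn1 => ->.
congr (_ * _ + _)%N.
apply: IH.
- by rewrite ltn_divLR // -expnSr.
- by rewrite ltn_divLR // -expnSr.
move=> k hk; rewrite -!divnMA -expnS; exact: H.
Qed.

Section S.
Variable C : numClosedFieldType.
Variable n : nat.

Definition bits (x : 'I_(2 ^ n)) : {ffun 'I_n -> 'I_2} := [ffun j => qbit x j].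

Lemma val_qbit (x : 'I_(2 ^ n)) j : val (qbit x j) = odd (x %/ 2 ^ (n.-1 - j)).
Proof. by rewrite /qbit; apply: inordK; rewrite ltnS leq_b1. Qed.

Lemma bits_inj : injective bits.
Proof.
move=> x y /ffunP E; apply: val_inj; apply: (@nat_bits_inj n); [exact: ltn_ord | exact: ltn_ord | move=> k hk].
have hj : (n.-1 - k < n)%N by rewrite -subn1; lia.
have := E (Ordinal hj). rewrite !ffunE. move=> /(congr1 val). rewrite !val_qbit /=.
have -> : (n.-1 - (n.-1 - k) = k)%N by rewrite -subn1; lia.
by case: odd; case: odd.
Qed.

Lemma bits_bij : bijective bits.
Proof. by apply: (inj_card_bij (@bits_inj)); rewrite card_ffun !card_ord. Qed.


Lemma sqi : 'i * 'i = - 1 :> C.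
Proof. by rewrite -expr2 sqrCi. Qed.

Lemma conjci : (Num.conj : {rmorphism C -> C}) 'i = - 'i.
Proof. exact: conjCi. Qed.

Ltac m2 := apply/matrixP => [[[|[|//]] ?] [[|[|//]] ?]]; rewrite !mxE ?big_ord_recl ?big_ord0 ?mxE; rewrite /= ?expr0 ?expr1 ?mxE /=;
rewrite ?(rmorph0, rmorph1, rmorphN, rmorphN1, conjCi, conjci, opprK, mulNr, mulrN, sqi, mul0r, mulr0, mul1r, mulr1, addr0, add0r, mulN1r, scale1r, oppr0, mulr0n, mulr1n) //.

Lemma m2t (a b : bool) : pauli1 C a b *m pauli1 C a b = 1%:M.
Proof. by case: a; case: b; m2. Qed.

Lemma m2z (a b : bool) : pauli1 C a b *m pauliZ C = (-1) ^+ b *: (pauliZ C *m pauli1 C a b).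
Proof. by case: a; case: b; m2. Qed.

Lemma m2x (a b : bool) : pauli1 C a b *m pauliX C = (-1) ^+ a *: (pauliX C *m pauli1 C a b).
Proof. by case: a; case: b; m2. Qed.

Lemma m2c (a b : bool) : map_mx Num.conj (pauli1 C a b) = (-1) ^+ (a && b) *: pauli1 C a b.
Proof. by case: a; case: b; m2. Qed.


Definition tens (A : 'I_n -> 'M[C]_2) : 'M[C]_(2 ^ n) :=
  \matrix_(x, y) \prod_(j < n) A j (qbit x j) (qbit y j).

Lemma eq_tens A B : (forall j, A j = B j) -> tens A = tens B.
Proof. by move=> E; apply/matrixP => x y; rewrite !mxE; apply: eq_bigr => j _; rewrite E. Qed.

Lemma tens_mul A B : tens A *m tens B = tens (fun j => A j *m B j).
Proof.
apply/matrixP => x y; rewrite !mxE.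
under eq_bigr => k _ do rewrite !mxE -big_split /=.
pose G (g : {ffun 'I_n -> 'I_2}) :=
  \prod_(j < n) (A j (qbit x j) (g j) * B j (g j) (qbit y j)).
transitivity (\sum_k G (bits k)).
  by apply: eq_bigr => k _; rewrite /G; apply: eq_bigr => j _; rewrite ffunE.
have -> : \sum_k G (bits k) = \sum_g G g.
  by symmetry; apply: (reindex bits); apply: onW_bij; exact: bits_bij.
rewrite /G -(bigA_distr_bigA (fun (j : 'I_n) (t : 'I_2) => A j (qbit x j) t * B j t (qbit y j))) /=.
by apply: eq_bigr => j _; rewrite mxE.
Qed.

Lemma tensZ (s : 'I_n -> C) A : tens (fun j => s j *: A j) = (\prod_j s j) *: tens A.
Proof.
apply/matrixP => x y; rewrite !mxE -big_split /=.
by apply: eq_bigr => j _; rewrite mxE.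
Qed.

Lemma ffun_neq (g h : {ffun 'I_n -> 'I_2}) : g != h -> exists j, g j != h j.
Proof.
move=> ne; apply/existsP; apply: contraR ne; rewrite negb_exists => /forallP H.
by apply/eqP/ffunP => j; apply/eqP; move: (H j); rewrite negbK.
Qed.

Lemma qbit_neq (x y : 'I_(2 ^ n)) : x != y -> exists j, qbit x j != qbit y j.
Proof.
rewrite -(inj_eq (@bits_inj)) => /ffun_neq [j]; rewrite !ffunE => H; by exists j.
Qed.

Lemma tens1 : tens (fun _ => 1%:M) = 1%:M.
Proof.
apply/matrixP => x y; rewrite !mxE; case: (eqVneq x y) => [->|ne].
  by rewrite big1 // => j _; rewrite mxE eqxx.
have [j Hj] := qbit_neq ne.
by rewrite (bigD1 j) //= mxE (negbTE Hj) mulr0n mul0r.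
Qed.

Lemma tens_conj A : conjm (tens A) = tens (fun j => map_mx Num.conj (A j)).
Proof.
apply/matrixP => x y; rewrite !mxE rmorph_prod.
by apply: eq_bigr => j _; rewrite mxE.
Qed.


Definition neg2 (t : 'I_2) : 'I_2 := if val t == 0%N then ord_max else ord0.

Lemma neg2_eq (t u : 'I_2) : (u == neg2 t) = (u != t).
Proof. by case: t => [[|[|//]] ?]; case: u => [[|[|//]] ?]. Qed.

Definition fl (i : 'I_n) (g : {ffun 'I_n -> 'I_2}) : {ffun 'I_n -> 'I_2} :=
  [ffun j => if j == i then neg2 (g j) else g j].

Lemma neg2K t : neg2 (neg2 t) = t.
Proof. by case: t => [[|[|//]] ?]; apply: val_inj. Qed.

Lemma flK i : involutive (fl i).
Proof. by move=> g; apply/ffunP => j; rewrite !ffunE; case: eqP => // _; rewrite neg2K. Qed.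

Lemma fl_eq i g h : (g == fl i h) = (h == fl i g).
Proof. by apply/eqP/eqP => ->; rewrite flK. Qed.

Definition zs (t : 'I_2) : C := if val t == 0%N then 1 else -1.

Lemma ZopE (i : 'I_n) (x y : 'I_(2 ^ n)) : Zop C i x y = (x == y)%:R * zs (qbit y i).
Proof.
rewrite /Zop /pauli mxE; case: (eqVneq x y) => [->|ne].
  rewrite (bigD1 i) //= /unit_vec eqxx mxE eqxx big1 ?mulr1 ?mul1r //.
  by move=> j /negbTE ->; rewrite mxE eqxx.
have [j Hj] := qbit_neq ne.
rewrite (bigD1 j) //= /unit_vec; case: (j == i); by rewrite /= mxE (negbTE Hj) ?mulr0n !mul0r.
Qed.

Lemma XopE (i : 'I_n) (x y : 'I_(2 ^ n)) : Xop C i x y = (bits x == fl i (bits y))%:R.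
Proof.
rewrite /Xop /pauli mxE; case: eqP => [E|E].
  rewrite big1 // => j _; have := congr1 (fun g : {ffun 'I_n -> 'I_2} => g j) E; rewrite /= !ffunE /unit_vec.
  case: (j == i) => /= ->; rewrite mxE ?eqxx //.
  by move: (neg2_eq (qbit y j) (neg2 (qbit y j))); rewrite eqxx => /esym ->.
have [j Hj] := ffun_neq (introN eqP E).
rewrite (bigD1 j) //=; move: Hj; rewrite !ffunE /unit_vec.
case: (j == i) => /= Hj; rewrite mxE.
  by rewrite neg2_eq negbK in Hj; rewrite Hj mul0r.
by rewrite (negbTE Hj) mulr0n mul0r.
Qed.

Lemma ZopT (i : 'I_n) : Zop C i = tens (fun j => if j == i then pauliZ C else 1%:M).
Proof. by apply: eq_tens => j; rewrite /unit_vec /zero_vec; case: (j == i). Qed.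

Lemma XopT (i : 'I_n) : Xop C i = tens (fun j => if j == i then pauliX C else 1%:M).
Proof. by apply: eq_tens => j; rewrite /unit_vec /zero_vec; case: (j == i). Qed.

Lemma tens_comm A i Bi s : A i *m Bi = s *: (Bi *m A i) ->
  tens A *m tens (fun j => if j == i then Bi else 1%:M) =
  s *: (tens (fun j => if j == i then Bi else 1%:M) *m tens A).
Proof.
move=> H; rewrite !tens_mul.
transitivity (tens (fun j => (if j == i then s else 1) *:
   ((if j == i then Bi else 1%:M) *m A j))).
  by apply: eq_tens => j; case: eqP => [->|_]; rewrite ?H // scale1r mulmx1 mul1mx.
rewrite tensZ (bigD1 i) //= eqxx big1 ?mulr1 // => j /negbTE -> //.
Qed.

Section Fb.
Variable fb : {ffun 'I_n -> 'I_2} -> 'I_(2 ^ n).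
Hypothesis bK : cancel bits fb.
Hypothesis fK : cancel fb bits.

Lemma mulZE (M : 'M[C]_(2 ^ n)) (i : 'I_n) (x y : 'I_(2 ^ n)) : (M *m Zop C i) x y = M x y * zs (qbit y i).
Proof.
rewrite mxE (bigD1 y) //= big1 ?addr0 => [|k ne]; rewrite ZopE ?eqxx ?mul1r //.
by rewrite (negbTE ne) mul0r mulr0.
Qed.

Lemma ZmulE (M : 'M[C]_(2 ^ n)) (i : 'I_n) (x y : 'I_(2 ^ n)) : (Zop C i *m M) x y = zs (qbit x i) * M x y.
Proof.
rewrite mxE (bigD1 x) //= big1 ?addr0 => [|k ne]; rewrite ZopE ?eqxx ?mul1r //.
by rewrite eq_sym (negbTE ne) mul0r mul0r.
Qed.

Lemma mulXE (M : 'M[C]_(2 ^ n)) (i : 'I_n) (x y : 'I_(2 ^ n)) : (M *m Xop C i) x y = M x (fb (fl i (bits y))).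
Proof.
rewrite mxE (bigD1 (fb (fl i (bits y)))) //= big1 ?addr0 => [|k ne]; rewrite XopE ?fK ?eqxx ?mulr1 //.
case: eqP => [E|_]; last by rewrite mulr0.
by move: ne; rewrite -E bK eqxx.
Qed.

Lemma XmulE (M : 'M[C]_(2 ^ n)) (i : 'I_n) (x y : 'I_(2 ^ n)) : (Xop C i *m M) x y = M (fb (fl i (bits x))) y.
Proof.
rewrite mxE (bigD1 (fb (fl i (bits x)))) //= big1 ?addr0 => [|k ne]; rewrite XopE ?fK.
  by rewrite fl_eq eqxx mul1r.
rewrite fl_eq; case: eqP => [E|_]; last by rewrite mul0r.
by move: ne; rewrite -E bK eqxx.
Qed.

End Fb.

Lemma self_opp (m : C) : m = - m -> m = 0.
Proof.
by move/eqP; rewrite -subr_eq0 opprK -mulr2n mulrn_eq0 /= => /eqP.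
Qed.

Lemma comm_scalar (M : 'M[C]_(2 ^ n)) :
  (forall i, M *m Zop C i = Zop C i *m M) ->
  (forall i, M *m Xop C i = Xop C i *m M) -> exists mu, M = mu%:M.
Proof.
move=> HZ HX; have [fb bK fK] := bits_bij.
have off x y : x != y -> M x y = 0.
  move=> ne; have [i Hi] := qbit_neq ne.
  have := congr1 (fun A : 'M[C]_(2 ^ n) => A x y) (HZ i); rewrite /= mulZE ZmulE.
  move: Hi; rewrite /zs.
  case: (qbit x i) => [[|[|//]] ?]; case: (qbit y i) => [[|[|//]] ?] //= _.
    by rewrite mulrN1 mul1r => /esym/self_opp.
  by rewrite mulr1 mulN1r => /self_opp.
pose d g := M (fb g) (fb g).
have dfl i g : d (fl i g) = d g.
  have := congr1 (fun A : 'M[C]_(2 ^ n) => A (fb (fl i g)) (fb g)) (HX i).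
  by rewrite /= (mulXE bK fK) (XmulE bK fK) !fK flK.
have Q : forall k (g h : {ffun 'I_n -> 'I_2}), (forall j : 'I_n, (k <= j)%N -> g j = h j) -> d g = d h.
  elim=> [|k IH] g h E.
    by have -> : g = h by apply/ffunP => j; exact: E.
  case: (ltnP k n) => [kn|nk]; last first.
    by apply: IH => j hj; have := ltn_ord j; lia.
  pose jk := Ordinal kn.
  case: (eqVneq (g jk) (h jk)) => Ejk.
    apply: IH => j; rewrite leq_eqVlt => /orP [/eqP kj|kj]; last exact: E.
    by have -> : j = jk by apply: val_inj; rewrite /= kj.
  rewrite -(dfl jk g); apply: IH => j hj; rewrite ffunE.
  case: (eqVneq j jk) => [->|nj]; first by apply/eqP; rewrite eq_sym neg2_eq eq_sym.
  apply: E; rewrite ltn_neqAle hj andbT; apply: contra_neq nj => kj.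
  by apply: val_inj; rewrite /= kj.
have x0 : 'I_(2 ^ n) by exists 0%N; rewrite expn_gt0.
exists (M x0 x0); apply/matrixP => x y; rewrite mxE.
case: (eqVneq x y) => [<-|ne]; last by rewrite off // mulr0n.
rewrite mulr1n -{1 2}(bK x) -{1 2}(bK x0); apply: (Q n) => j hj.
by have := ltn_ord j; lia.
Qed.


Lemma pauli_tens (a b : 'I_n -> bool) : pauli C a b = tens (fun j => pauli1 C (a j) (b j)).
Proof. by []. Qed.

Lemma pauli_conj (a b : 'I_n -> bool) : conjm (pauli C a b) = (-1) ^+ (dot2 a b) *: pauli C a b.
Proof.
rewrite pauli_tens tens_conj (eq_tens (fun j => m2c (a j) (b j))) tensZ.
by rewrite prodrXr /dot2 signr_odd.
Qed.

End S.

Theorem lemma3 (C : numClosedFieldType) (n : nat) (U : 'M[C]_(2 ^ n))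
  (a b c d : 'I_n -> 'I_n -> bool) (f h : 'I_n -> bool) :
  clifford U ->
  (forall i : 'I_n, U *m Zop C i *m adjm U = (-1) ^+ f i *: pauli C (a i) (b i)) ->
  (forall i : 'I_n, U *m Xop C i *m adjm U = (-1) ^+ h i *: pauli C (c i) (d i)) ->
  let alpha := fun i => dot2 (c i) (d i) in
  let beta := fun i => dot2 (a i) (b i) in
  exists lam : C, `|lam| = 1 /\ conjm U = lam *: (U *m pauli C alpha beta).
Proof.
move=> [unitU _] HZ HX alpha beta.
set Ud := adjm U; set V := conjm U; set P := pauli C alpha beta.
have hUUd : U *m Ud = 1%:M := unitU.
have hUdU : Ud *m U = 1%:M := mulmx1C hUUd.
have conjmM (A B : 'M[C]_(2 ^ n)) : conjm (A *m B) = conjm A *m conjm B by exact: map_mxM.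
have conjmZ (s : C) (A : 'M[C]_(2 ^ n)) : conjm (s *: A) = Num.conj s *: conjm A by exact: map_mxZ.
have conjmK (A : 'M[C]_(2 ^ n)) : conjm (conjm A) = A.
  by apply/matrixP => x y; rewrite !mxE conjCK.
have conj_adj : conjm Ud = adjm V.
 by apply/matrixP => x y; rewrite /Ud /adjm /V /conjm !mxE.
have hVVd : V *m adjm V = 1%:M.
  by rewrite -conj_adj -conjmM hUUd; apply/matrixP => x y; rewrite !mxE rmorphMn rmorph1.
have hVdV : adjm V *m V = 1%:M := mulmx1C hVVd.
have conjZop (i : 'I_n) : conjm (Zop C i) = Zop C i.
  rewrite /Zop pauli_conj.
  have -> : dot2 (unit_vec i) (@zero_vec n) = false.
    by rewrite /dot2 big1 // => j _; rewrite /zero_vec andbF.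
  by rewrite scale1r.
have conjXop (i : 'I_n) : conjm (Xop C i) = Xop C i.
  rewrite /Xop pauli_conj.
  have -> : dot2 (@zero_vec n) (unit_vec i) = false.
    by rewrite /dot2 big1.
  by rewrite scale1r.
have hVZ (i : 'I_n) : V *m Zop C i *m adjm V = (-1) ^+ (beta i) *: (U *m Zop C i *m Ud).
  have := congr1 (@conjm C n) (HZ i); rewrite !conjmM conjmZ conj_adj conjZop pauli_conj rmorph_sign => ->.
  by rewrite HZ !scalerA mulrC.
have hVX (i : 'I_n) : V *m Xop C i *m adjm V = (-1) ^+ (alpha i) *: (U *m Xop C i *m Ud).
  have := congr1 (@conjm C n) (HX i); rewrite !conjmM conjmZ conj_adj conjXop pauli_conj rmorph_sign => ->.
  by rewrite HX !scalerA mulrC.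
set W := Ud *m V.
have gen (Q : 'M[C]_(2 ^ n)) (s : C) : V *m Q *m adjm V = s *: (U *m Q *m Ud) ->
    W *m Q = s *: (Q *m W).
  move=> H.
  have e1 : V *m Q = s *: (U *m Q *m W).
    by rewrite /W mulmxA scalemxAl -H -!mulmxA hVdV mulmx1.
  by rewrite /W -mulmxA e1 -scalemxAr !mulmxA hUdU mul1mx.
have hWZ (i : 'I_n) := gen _ _ (hVZ i).
have hWX (i : 'I_n) := gen _ _ (hVX i).
have hPZ (i : 'I_n) : P *m Zop C i = (-1) ^+ (beta i) *: (Zop C i *m P).
  by rewrite ZopT; apply: tens_comm; exact: m2z.
have hPX (i : 'I_n) : P *m Xop C i = (-1) ^+ (alpha i) *: (Xop C i *m P).
  by rewrite XopT; apply: tens_comm; exact: m2x.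
have gen2 (Q : 'M[C]_(2 ^ n)) (bb : bool) : W *m Q = (-1) ^+ bb *: (Q *m W) ->
    P *m Q = (-1) ^+ bb *: (Q *m P) -> W *m P *m Q = Q *m (W *m P).
  move=> H1 H2.
  rewrite -mulmxA H2 -scalemxAr [W *m (Q *m P)]mulmxA H1 -scalemxAl scalerA -signr_addb addbb.
  by rewrite expr0 scale1r !mulmxA.
have [mu hM] : exists mu, W *m P = mu%:M.
  by apply: comm_scalar => i; apply: gen2; [exact: hWZ | exact: hPZ | exact: hWX | exact: hPX].
have hPP : P *m P = 1%:M.
  by rewrite /P pauli_tens tens_mul -tens1; apply: eq_tens => j; exact: m2t.
have eW : W = mu *: P by rewrite -[W]mulmx1 -hPP mulmxA hM mul_scalar_mx.
have eV : V = mu *: (U *m P).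
  by rewrite scalemxAr -eW /W mulmxA hUUd mul1mx.
exists mu; split => //.
have := congr1 (@conjm C n) eV; rewrite /V conjmK conjmZ conjmM -/V eV /P pauli_conj -/P.
rewrite -scalemxAl -scalemxAr !scalerA -mulmxA hPP mulmx1 => eU.
have x0 : 'I_(2 ^ n) by exists 0%N; rewrite expn_gt0.
have := congr1 (fun A : 'M[C]_(2 ^ n) => (A *m Ud) x0 x0) eU.
rewrite /= -scalemxAl hUUd !mxE eqxx mulr1n mulr1 -normCKC.
case: (dot2 alpha beta) => /=; rewrite ?expr1 ?expr0 ?mulr1 ?mulrN1.
  move=> /(congr1 (fun t => - t)); rewrite opprK => h1; have := exprn_ge0 2 (normr_ge0 mu); rewrite -h1.
  by rewrite oppr_ge0 ler10.
move=> /esym/eqP; rewrite sqrf_eq1 => /orP [/eqP //| /eqP h1].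
by have := normr_ge0 mu; rewrite h1 oppr_ge0 ler10.
Qed.
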